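(* Fix nonnegative real parameters $k^A,k^B,t^A,t^B$ and let $cost(a,b,s)$ be as in the context. Then: (1) for fixed integers $a,b\ge 0$, the function $s\mapsto cost(a,b,s)$ on integers $s\ge 0$ is convex, i.e. its difference function $cost(a,b,s+1)-cost(a,b,s)$ is non-decreasing in $s$; (2) for fixed integers $s,a\ge 0$, the function $b\mapsto cost(a,b,s)$ is non-decreasing on integers $b\ge 0$; (3) for fixed integers $s,b\ge 0$, the function $a\mapsto cost(a,b,s)$ is non-decreasing on integers $a\ge 0$; (4) the function $x\mapsto cost(x,x+1,x+1)$ is non-decreasing on integers $x\ge 0$.
   Context: For integers $a,s\ge 0$ define $cost^A(a,s)=\min\{s\,t^A+k^A(x_1^2+\dots+x_s^2) : x_1+\dots+x_s=a,\ x_i\in\mathbb{Z}_{\ge 0}\}$, with $cost^A(0,0)=0$ and $cost^A(a,0)=+\infty$ for $a>0$; $cost^B(b,s)$ is defined analogously with $t^B,k^B$. Define $mcost^A(a,s)=\min\{cost^A(a,s') : s'\in\{s-1,s,s+1\},\ s'\ge 0\}$ and $cost(a,b,s)=cost^B(b,s)+mcost^A(a,s)$, with the usual conventions for $+\infty$. ''Increasing'' in the paper means non-decreasing. *)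

(* Defs.v *)
From mathcomp Require Import all_boot all_order all_algebra.
From mathcomp Require Import constructive_ereal.
Set Implicit Arguments. Unset Strict Implicit. Unset Printing Implicit Defensive.
Import Order.TTheory GRing.Theory Num.Theory.
Local Open Scope ring_scope.
Local Open Scope ereal_scope.

(* cost(a,s) = min { s*t + k*(x_1^2+...+x_s^2) : x_1+...+x_s = a, x_i in N },
   as an extended real; the minimum of the empty family is +oo.
   Each x_i <= a, so ranging over x : 'I_s -> 'I_(a+1) loses nothing.
   For s = 0 the only family is empty with sum 0: cost(0,0) = 0 and
   cost(a,0) = +oo for a > 0, matching the paper's conventions. *)
Definition cost1 {R : realDomainType} (t k : R) (a s : nat) : \bar R :=
  \big[Order.min/+oo]_(x : {ffun 'I_s -> 'I_a.+1} | (\sum_i (x i : nat))%N == a)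
     ((s%:R * t + k * (\sum_i ((x i : nat) ^ 2)%N)%:R)%R)%:E.

Definition mcost1 {R : realDomainType} (t k : R) (a s : nat) : \bar R :=
  match s with
  | 0%N => Order.min (cost1 t k a 0) (cost1 t k a 1)
  | s'.+1 => Order.min (Order.min (cost1 t k a s') (cost1 t k a s'.+1))
                       (cost1 t k a s'.+2)
  end.

Definition cost {R : realDomainType} (kA kB tA tB : R) (a b s : nat) : \bar R :=
  cost1 tB kB b s + mcost1 tA kA a s.

(* Main.v *)
Require Import Defs.
From mathcomp Require Import all_boot all_order all_algebra.
From mathcomp Require Import constructive_ereal.
From mathcomp Require Import zify ring lra.
Import Order.TTheory GRing.Theory Num.Theory.
Local Open Scope ring_scope.
Local Open Scope ereal_scope.

Definition Fq (a s : nat) : nat := (s * (a %/ s) ^ 2 + (2 * (a %/ s) + 1) * (a %% s))%N.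

Lemma sq_lb (y q : nat) : ((2*q+1)*y <= y^2 + q*(q+1))%N.
Proof. case: (leqP y q) => h; nia. Qed.

Lemma sum_lb s (x : 'I_s -> nat) q :
  ((2*q+1) * (\sum_i x i) <= \sum_i (x i)^2 + s*(q*(q+1)))%N.
Proof.
rewrite big_distrr /=.
have -> : (s*(q*(q+1)) = \sum_(i < s) q*(q+1))%N by rewrite sum_nat_const card_ord.
rewrite -big_split /=; apply: leq_sum => i _; exact: sq_lb.
Qed.

Lemma F_id a s : ((2*(a%/s)+1)*a = Fq a s + s*((a%/s)*((a%/s)+1)))%N.
Proof.
rewrite /Fq; set q := (a %/ s)%N; set r := (a %% s)%N.
have E : a = (q*s + r)%N by rewrite /q /r -divn_eq.
rewrite {1}E; nia.
Qed.

Lemma sum_ind s r : (\sum_(i < s) ((i < r)%N : nat) = minn s r)%N.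
Proof.
elim: s => [|s IH]; first by rewrite big_ord0 min0n.
rewrite big_ord_recr /= IH; case: (ltnP s r) => h /=; lia.
Qed.

Lemma bal a s : ((0 < s) || (a == 0))%N ->
  exists x : {ffun 'I_s -> 'I_a.+1},
    (\sum_i (x i : nat))%N = a /\ (\sum_i ((x i : nat) ^ 2)%N)%N = Fq a s.
Proof.
case: s => [|s] /=.
  move/eqP=> ->; exists [ffun i => ord0]; by rewrite !big_ord0.
move=> _; set q := (a %/ s.+1)%N; set r := (a %% s.+1)%N.
have E : a = (q*s.+1 + r)%N by rewrite /q /r -divn_eq.
have Hr : (r < s.+1)%N by rewrite /r ltn_mod.
have Hle : forall i : 'I_s.+1, (q + (i < r) < a.+1)%N.
  move=> i; case: (ltnP i r) => h /=; nia.
exists [ffun i : 'I_s.+1 => (inord (q + (i < r)) : 'I_a.+1)]; split.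
  rewrite (eq_bigr (fun i : 'I_s.+1 => q + (i < r))%N); last first.
    by move=> i _; rewrite ffunE inordK.
  rewrite big_split /= sum_nat_const card_ord sum_ind; lia.
rewrite (eq_bigr (fun i : 'I_s.+1 => q^2 + (2*q+1) * (i < r))%N); last first.
  by move=> i _; rewrite ffunE inordK //; case: (i < r)%N => /=; nia.
rewrite big_split /= sum_nat_const card_ord -big_distrr /= sum_ind /Fq -/q -/r.
have -> : minn s.+1 r = r by lia.
done.
Qed.

Lemma F_le a s (x : 'I_s -> nat) : (\sum_i x i)%N = a -> (Fq a s <= \sum_i (x i)^2)%N.
Proof.
move=> Hs; have := sum_lb s x (a %/ s); rewrite Hs F_id leq_add2r; done.
Qed.

Lemma F_ge a s q : ((0 < s) || (a == 0))%N ->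
  ((2*q+1)*a <= Fq a s + s*(q*(q+1)))%N.
Proof.
move=> D; have [x [H1 H2]] := bal a s D.
have := sum_lb s (fun i => (x i : nat)) q; rewrite H1 H2; done.
Qed.

Definition Gr {R : realDomainType} (t k : R) (a s : nat) : R :=
  (s%:R * t + k * (Fq a s)%:R)%R.
Definition al {R : realDomainType} (k : R) (a q : nat) : R := (k * ((2*q+1)*a)%N%:R)%R.
Definition be {R : realDomainType} (t k : R) (q : nat) : R := (t - k * (q*(q+1))%N%:R)%R.

Lemma P1 (R : realDomainType) (t k : R) a q s : (0 <= k)%R -> ((0 < s) || (a == 0))%N ->
  (al k a q + s%:R * be t k q <= Gr t k a s)%R.
Proof.
move=> hk D; have H := F_ge a s q D.
have H' : (((2*q+1)*a)%N%:R <= (Fq a s + s*(q*(q+1)))%N%:R :> R)%R by rewrite ler_nat.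
have := ler_wpM2l hk H'.
rewrite /al /be /Gr natrD natrM; lra.
Qed.

Lemma P2 (R : realDomainType) (t k : R) a s :
  Gr t k a s = (al k a (a %/ s) + s%:R * be t k (a %/ s))%R.
Proof.
rewrite /al /be /Gr F_id natrD natrM; lra.
Qed.

Lemma pair_ineq (R : realDomainType) (G al be : nat -> R) (D : pred nat)
 (H1 : forall q s, D s -> (al q + s%:R * be q <= G s)%R)
 (H2 : forall s, exists q, G s = (al q + s%:R * be q)%R)
 i m1 m2 j : D i -> D j -> (i <= m1)%N -> (i <= m2)%N -> (m1 + m2 = i + j)%N ->
 (G m1 + G m2 <= G i + G j)%R.
Proof.
move=> Di Dj h1 h2 hs.
have [d Ed] : exists d, m1 = (i + d)%N by exists (m1 - i)%N; lia.
have [e Ee] : exists e, m2 = (i + e)%N by exists (m2 - i)%N; lia.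
have Ej : j = (i + e + d)%N by lia.
have [p Hp] := H2 m1; have [q Hq] := H2 m2.
rewrite Hp Hq.
have [hb|hb] := leP (be p) (be q).
- have := H1 p i Di; have := H1 q j Dj.
  have := ler_wpM2l (ler0n R d) hb.
  rewrite Ed Ee Ej !natrD; lra.
- have := H1 q i Di; have := H1 p j Dj.
  have := ler_wpM2l (ler0n R e) (ltW hb).
  rewrite Ed Ee Ej !natrD; lra.
Qed.

Lemma cost1E (R : realDomainType) (t k : R) a s : (0 <= k)%R ->
  cost1 t k a s = if ((0 < s) || (a == 0))%N then (Gr t k a s)%:E else +oo.
Proof.
move=> hk; case: ifP => D.
- apply/eqP; rewrite eq_le; apply/andP; split.
  + have [x [Hs Hq]] := bal a s D.
    apply: (bigmin_inf x); first by rewrite Hs.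
    by rewrite Hq /Gr.
  + apply: le_bigmin; first exact: leey.
    move=> x /eqP Hs; rewrite lee_fin; apply: lerD => //.
    apply: (ler_wpM2l hk); rewrite ler_nat.
    exact: (F_le a s (fun i => (x i : nat)) Hs).
- apply: bigmin_eq_id => x.
  move: D; case: s x => [|s] x //= D.
  by rewrite big_ord0 eq_sym D.
Qed.

Definition Dm (a s : nat) : bool := ((0 < s) || (a == 0))%N.

Lemma Gr_pair (R : realDomainType) (t k : R) a i m1 m2 j : (0 <= k)%R ->
  Dm a i -> Dm a j -> (i <= m1)%N -> (i <= m2)%N -> (m1 + m2 = i + j)%N ->
  (Gr t k a m1 + Gr t k a m2 <= Gr t k a i + Gr t k a j)%R.
Proof.
move=> hk; apply: (@pair_ineq R (Gr t k a) (al k a) (be t k) (Dm a)).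
- by move=> q s D; apply: P1.
- by move=> s; exists (a %/ s)%N; apply: P2.
Qed.

Lemma Gr_mono (R : realDomainType) (t k : R) a1 a2 s : (0 <= k)%R ->
  (a1 <= a2)%N -> Dm a2 s -> (Gr t k a1 s <= Gr t k a2 s)%R.
Proof.
move=> hk ha D; rewrite (P2 _ t k a1 s); apply: (le_trans _ (P1 _ t k a2 (a1 %/ s) s hk D)).
rewrite lerD2r /al; apply: (ler_wpM2l hk); rewrite ler_nat; exact: leq_mul (leqnn _) ha.
Qed.

Lemma cost1_mono (R : realDomainType) (t k : R) a1 a2 s : (0 <= k)%R ->
  (a1 <= a2)%N -> cost1 t k a1 s <= cost1 t k a2 s.
Proof.
move=> hk ha; rewrite !cost1E //.
case D2: ((0 < s) || (a2 == 0))%N; last exact: leey.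
have -> : ((0 < s) || (a1 == 0))%N by case/orP: D2 => [->//|/eqP h]; apply/orP; right; lia.
rewrite lee_fin; exact: Gr_mono.
Qed.

Lemma min_pick (R : realDomainType) (x y : \bar R) : Order.min x y = x \/ Order.min x y = y.
Proof. by case: leP => _; [left|right]. Qed.

Lemma min_le2 (R : realDomainType) (x1 x2 y1 y2 : \bar R) :
  x1 <= x2 -> y1 <= y2 -> Order.min x1 y1 <= Order.min x2 y2.
Proof.
move=> h1 h2; rewrite le_min !ge_min; apply/andP; split; apply/orP; by [left|right].
Qed.

Lemma mcost_mono (R : realDomainType) (t k : R) a1 a2 s : (0 <= k)%R ->
  (a1 <= a2)%N -> mcost1 t k a1 s <= mcost1 t k a2 s.
Proof.
move=> hk ha; case: s => [|s] /=; rewrite ?min_le2 // cost1_mono //.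
Qed.

Lemma mcost_le (R : realDomainType) (t k : R) a s i :
  (s <= i.+1)%N -> (i <= s.+1)%N -> mcost1 t k a s <= cost1 t k a i.
Proof.
case: s => [|s] h1 h2 /=.
  have [->|->] : i = 0%N \/ i = 1%N by lia.
  1,2: by rewrite ge_min lexx ?orbT.
have [->|[->|->]] : i = s \/ i = s.+1 \/ i = s.+2 by lia.
all: by rewrite !ge_min lexx ?orbT.
Qed.

Lemma mcost_pick (R : realDomainType) (t k : R) a s :
  exists i, [/\ (s <= i.+1)%N, (i <= s.+1)%N & mcost1 t k a s = cost1 t k a i].
Proof.
case: s => [|s] /=.
  have [->|->] := min_pick _ (cost1 t k a 0) (cost1 t k a 1).
  exists 0%N; split => //; lia. exists 1%N; split => //; lia.
have [->|->] := min_pick _ (Order.min (cost1 t k a s) (cost1 t k a s.+1)) (cost1 t k a s.+2).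
  have [->|->] := min_pick _ (cost1 t k a s) (cost1 t k a s.+1).
  exists s; split => //; lia. exists s.+1; split => //; lia.
exists s.+2; split => //; lia.
Qed.

Lemma mcost_att (R : realDomainType) (t k : R) a s : (0 <= k)%R ->
  exists i, [/\ (s <= i.+1)%N, (i <= s.+1)%N, Dm a i & mcost1 t k a s = (Gr t k a i)%:E].
Proof.
move=> hk; have [i [h1 h2 E]] := mcost_pick _ t k a s.
have L := @mcost_le _ t k a s s.+1 (leqW (leqnSn s)) (leqnn _).
move: E; rewrite cost1E //; case D: (_ || _) => E.
  by exists i; rewrite /Dm D.
by move: L; rewrite E cost1E //= leye_eq.
Qed.

Lemma mcost_conv (R : realDomainType) (t k : R) a s : (0 <= k)%R ->
  exists x0 x1 x2 : R, [/\ mcost1 t k a s = x0%:E, mcost1 t k a s.+1 = x1%:E,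
     mcost1 t k a s.+2 = x2%:E & (x1 + x1 <= x0 + x2)%R].
Proof.
move=> hk.
have [i [hi1 hi2 Di ->]] := mcost_att _ t k a s hk.
have [j [hj1 hj2 Dj ->]] := mcost_att _ t k a s.+2 hk.
have [l [_ _ _ El]] := mcost_att _ t k a s.+1 hk.
exists (Gr t k a i), (Gr t k a l), (Gr t k a j); split => //.
pose m1 := ((i + j) %/ 2)%N; pose m2 := (i + j - m1)%N.
have Dm1 : Dm a m1.
  move: Di; rewrite /Dm; case/orP => [h|->]; last by rewrite orbT.
  apply/orP; left; rewrite /m1; lia.
have Dm2 : Dm a m2 by rewrite /Dm; apply/orP; left; rewrite /m2 /m1; lia.
have L1 : mcost1 t k a s.+1 <= cost1 t k a m1 by apply: mcost_le; rewrite /m1; lia.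
have L2 : mcost1 t k a s.+1 <= cost1 t k a m2 by apply: mcost_le; rewrite /m2 /m1; lia.
move: L1 L2; rewrite El !cost1E //.
move: Dm1 Dm2; rewrite /Dm => -> ->; rewrite !lee_fin => L1 L2.
apply: (le_trans _ (Gr_pair _ t k a i _ _ j hk Di Dj _ _ _)); first exact: lerD L1 L2.
all: rewrite /m2 /m1; lia.
Qed.

Lemma Fq_small a s : (a <= s)%N -> Fq a s = a.
Proof.
move=> h; rewrite /Fq; case: (ltnP a s) => h'.
  by rewrite divn_small // modn_small //; lia.
have -> : a = s by lia.
case: s {h h'} => [|s]; first by [].
by rewrite divnn modnn /=; lia.
Qed.

Theorem lemma3 (R : realDomainType) (kA kB tA tB : R)
  (hkA : (0 <= kA)%R) (hkB : (0 <= kB)%R) (htA : (0 <= tA)%R) (htB : (0 <= tB)%R) :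
  (* (1) convexity in s: the difference function is non-decreasing *)
  (forall a b s : nat,
     cost kA kB tA tB a b s.+1 - cost kA kB tA tB a b s
       <= cost kA kB tA tB a b s.+2 - cost kA kB tA tB a b s.+1) /\
  (* (2) non-decreasing in b *)
  (forall s a b1 b2 : nat, (b1 <= b2)%N ->
     cost kA kB tA tB a b1 s <= cost kA kB tA tB a b2 s) /\
  (* (3) non-decreasing in a *)
  (forall s b a1 a2 : nat, (a1 <= a2)%N ->
     cost kA kB tA tB a1 b s <= cost kA kB tA tB a2 b s) /\
  (* (4) x |-> cost(x, x+1, x+1) non-decreasing *)
  (forall x y : nat, (x <= y)%N ->
     cost kA kB tA tB x x.+1 x.+1 <= cost kA kB tA tB y y.+1 y.+1).
Proof.
split.
  move=> a b s; rewrite /cost.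
  have [x0 [x1 [x2 [E0 E1 E2 Hx]]]] := mcost_conv _ tA kA a s hkA.
  rewrite E0 E1 E2 !(cost1E _ tB kB b _ hkB) /=.
  case D: ((0 < s) || (b == 0))%N.
    rewrite -!EFinD -?EFinN -?EFinD -?EFinN -?EFinD lee_fin.
    have := Gr_pair _ tB kB b s s.+1 s.+1 s.+2 hkB D (erefl true) (leqnSn s) (leqnSn s) (esym (addnS _ _)).
    lra.
  by rewrite addye // EFinN -/(_ - _) addeNy leNye.
split.
  move=> s a b1 b2 h; rewrite /cost; apply: leeD; [exact: cost1_mono | exact: lexx].
split.
  move=> s b a1 a2 h; rewrite /cost; apply: leeD; [exact: lexx | exact: mcost_mono].
have Ec : forall z, cost kA kB tA tB z z.+1 z.+1 =
   ((z.+1%:R*tB + kB*z.+1%:R) + (z%:R*tA + kA*z%:R))%:E.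
  move=> z; rewrite /cost /= !(cost1E _ tA kA z _ hkA) (cost1E _ tB kB _ _ hkB) /=.
  have -> : ((0 < z) || (z == 0))%N by case: z.
  have f0 : Fq z z = z by apply: Fq_small.
  have f1 : Fq z z.+1 = z by apply: Fq_small; lia.
  have f2 : Fq z z.+2 = z by apply: Fq_small; lia.
  have f3 : Fq z.+1 z.+1 = z.+1 by apply: Fq_small.
  rewrite /Gr f0 f1 f2 f3.
  rewrite min_l ?min_l ?EFinD //; rewrite lee_fin lerD2r; apply: (ler_wpM2r htA); rewrite ler_nat; lia.
move=> x y h; rewrite !Ec lee_fin.
have hxy : (x%:R <= y%:R :> R)%R by rewrite ler_nat.
have hxy' : (x.+1%:R <= y.+1%:R :> R)%R by rewrite ler_nat.
apply: lerD; apply: lerD.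
- exact: ler_wpM2r.
- exact: ler_wpM2l.
- exact: ler_wpM2r.
- exact: ler_wpM2l.
Qed.
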